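(* In the setting of the context, for $i\in\{1,2\}$ and $\lambda>0$ let $\mathbf s_i(\lambda)=\big(\mathbf X_{s,1}\otimes\mathbf X_{s,2,i}+\lambda\mathbf I\big)^{-1}\mathbf x_{s,3,i}$ and $g(\lambda)=\mathrm{Tr}(\mathbf s_i(\lambda)\mathbf s_i(\lambda)^H)=\|\mathbf s_i(\lambda)\|_2^2$ (which equals $\mathrm{Tr}(\mathbf S_i\mathbf S_i^H)$ for $\mathbf s_i=\mathrm{vec}(\mathbf S_i)$). Then $g$ is monotonically non-increasing in $\lambda$, and if $\lambda_i>0$ satisfies $g(\lambda_i)=\tau_i$ (with $\tau_i>0$), then $$\lambda_i\le\sqrt{\frac{\sigma_{s,3,i}}{\tau_i}}-\sigma_{s,\min,i},$$ where $\sigma_{s,3,i}=\|\mathbf x_{s,3,i}\|_2^2$ and $\sigma_{s,\min,i}$ is the smallest eigenvalue of $\mathbf X_{s,1}\otimes\mathbf X_{s,2,i}$.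
   Context: MAC phase of a MIMO two-way relay system (sources with $N_1,N_2$ antennas, relay with $M$ antennas, training length $L_S$). Let $\mathbf Z_{t,H_i}\in\mathbb C^{N_i\times N_i}$ ($i=1,2$) be Hermitian positive definite with $\mathbf Z_{t,H_i}=\mathbf C_{t,H_i}\mathbf C_{t,H_i}^H$, $\mathbf C_{t,H}=\mathrm{Blkdiag}(\mathbf C_{t,H_1},\mathbf C_{t,H_2})$; let $\mathbf K_{q,R}\in\mathbb C^{L_S\times L_S}$ be Hermitian positive definite (temporal disturbance covariance at the relay; here the spatial disturbance covariance equals the receive channel covariance, $\mathbf K_{r,R}=\mathbf Z_{r,H}$). Given any $\mathbf S\in\mathbb C^{(N_1+N_2)\times L_S}$ (current training), define $\mathbf T_{R,1}=\mathbf C_{t,H}^H\mathbf S^*\big(\mathbf S^T\mathbf C_{t,H}\mathbf C_{t,H}^H\mathbf S^*+\mathbf K_{q,R}\big)^{-1}\in\mathbb C^{(N_1+N_2)\times L_S}$, let $\mathbf T_{R,1,1}$ be its first $N_1$ rows and $\mathbf T_{R,1,2}$ its last $N_2$ rows, and set $\mathbf X_{s,1}=\mathbf T_{R,1}^H\mathbf C_{t,H}^H\mathbf C_{t,H}\mathbf T_{R,1}$, $\mathbf X_{s,2,i}=\mathbf Z_{t,H_i}^T$, $\mathbf x_{s,3,i}=\mathrm{vec}\big((\mathbf T_{R,1,i}^H\mathbf C_{t,H_i}^H\mathbf Z_{t,H_i}^H)^T\big)$. *)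

(* Defs.v *)
(* Complex scalars: an arbitrary numClosedFieldType C
   (e.g. complex R over a real closed field, or algC). *)
From HB Require Import structures.
From mathcomp Require Import all_boot all_order all_algebra.
From mathcomp Require Import mxtens.
Set Implicit Arguments.
Unset Strict Implicit.
Unset Printing Implicit Defensive.
Import Order.TTheory GRing.Theory Num.Theory.
Local Open Scope ring_scope.

Section Defs.
Variable C : numClosedFieldType.

Definition conjm {m n} (A : 'M[C]_(m, n)) : 'M[C]_(m, n) := map_mx Num.conj A.
Definition hermt {m n} (A : 'M[C]_(m, n)) : 'M[C]_(n, m) := (conjm A)^T.

(* Kronecker product A (x) B : the library's tensmx (row index i*p+k). *)
Definition kron {m n p q} (A : 'M[C]_(m, n)) (B : 'M[C]_(p, q))
  : 'M[C]_(m * p, n * q) := tensmx A B.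

(* vec : column-stacking vectorization of an a x b matrix, entry (i,j)
   goes to index j*a + i. *)
Definition vec {a b} (M : 'M[C]_(a, b)) : 'cV[C]_(b * a) :=
  \col_k M (mxtens_unindex k).2 (mxtens_unindex k).1.

Definition herm_posdef {n} (A : 'M[C]_n) : Prop :=
  hermt A = A /\ forall v : 'cV[C]_n, v != 0 -> 0 < (hermt v *m A *m v) 0 0.

Definition is_min_eigenvalue {n} (A : 'M[C]_n) (a : C) : Prop :=
  eigenvalue A a /\ forall b, eigenvalue A b -> a <= b.

Definition sqnorm {n} (x : 'cV[C]_n) : C := \sum_k `|x k 0| ^+ 2.

(* The claim of the lemma for one source index i, given
   X1 = X_{s,1} (L x L), Zi = Z_{t,H_i}, Ci = C_{t,H_i} (N x N),
   Ti = T_{R,1,i} (N x L). *)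
Definition lemma2_claim {L N} (X1 : 'M[C]_L) (Zi Ci : 'M[C]_N)
    (Ti : 'M[C]_(N, L)) : Prop :=
  let A : 'M[C]_(L * N) := kron X1 (Zi^T) in           (* X_{s,1} (x) X_{s,2,i} *)
  let x3 : 'cV[C]_(L * N) :=
      vec ((hermt Ti *m hermt Ci *m hermt Zi)^T) in     (* x_{s,3,i} *)
  let s (lam : C) : 'cV[C]_(L * N) := invmx (A + lam%:M) *m x3 in
  let g (lam : C) : C := \tr (s lam *m hermt (s lam)) in
  (forall l1 l2 : C, 0 < l1 -> l1 <= l2 -> g l2 <= g l1) /\
  (forall (lam tau smin : C), 0 < lam -> 0 < tau -> g lam = tau ->
     is_min_eigenvalue A smin ->
     lam <= sqrtC (sqnorm x3 / tau) - smin).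
End Defs.

(* Main.v *)
Require Import Defs.
From HB Require Import structures.
From mathcomp Require Import all_boot all_order all_algebra.
From mathcomp Require Import mxtens spectral.
Import Order.TTheory GRing.Theory Num.Theory Num.Def.
Local Open Scope ring_scope.

Section H.
Variable C : numClosedFieldType.

Lemma hermtM m n p (A : 'M[C]_(m,n)) (B : 'M[C]_(n,p)) :
  hermt (A *m B) = hermt B *m hermt A.
Proof. by rewrite /hermt /conjm map_mxM trmx_mul. Qed.

Lemma hermtK m n (A : 'M[C]_(m,n)) : hermt (hermt A) = A.
Proof.
by rewrite /hermt /conjm map_trmx trmxK -map_mx_comp map_mx_id // => z; exact: conjCK.
Qed.

Lemma hermt_tens m n p q (A : 'M[C]_(m,n)) (B : 'M[C]_(p,q)) :
  hermt (tensmx A B) = tensmx (hermt A) (hermt B).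
Proof. by rewrite /hermt /conjm map_mxT trmx_tens. Qed.

Lemma hermt_tr m n (A : 'M[C]_(m,n)) : hermt A = map_mx Num.conj (A^T).
Proof. by rewrite /hermt /conjm map_trmx. Qed.

Lemma rv_norm m (v : 'rV[C]_m) : (v *m hermt v) 0 0 = \sum_j `|v 0 j| ^+ 2.
Proof. rewrite !mxE; apply: eq_bigr => j _; by rewrite !mxE normCK. Qed.

Lemma rv_norm_ge0 m (v : 'rV[C]_m) : 0 <= (v *m hermt v) 0 0.
Proof. rewrite rv_norm; apply: sumr_ge0 => j _; exact: exprn_ge0. Qed.

Lemma rv_norm_gt0 m (v : 'rV[C]_m) : v != 0 -> 0 < (v *m hermt v) 0 0.
Proof.
move=> vn0; rewrite lt_def rv_norm_ge0 andbT rv_norm.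
apply/negP => /eqP/eqP; rewrite psumr_eq0 => [/allP H|j _]; last exact: exprn_ge0.
apply/negP: vn0; rewrite negbK; apply/eqP/rowP => j; rewrite mxE.
by have := H j (mem_index_enum _); rewrite /= sqrf_eq0 normr_eq0 => /eqP.
Qed.

Lemma sqnormE n (x : 'cV[C]_n) : sqnorm x = (hermt x *m x) 0 0.
Proof. rewrite /sqnorm !mxE; apply: eq_bigr => j _; by rewrite !mxE normCKC. Qed.

Lemma sqnorm_tr n (x : 'cV[C]_n) : \tr (x *m hermt x) = sqnorm x.
Proof. by rewrite mxtrace_mulC trace_mx11 sqnormE. Qed.


Lemma entry_herm p q r (X : 'M[C]_(p,r)) (Y : 'M[C]_(q,r)) i j :
  (X *m hermt Y) i j = (row i X *m hermt (row j Y)) 0 0.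
Proof. rewrite !mxE; apply: eq_bigr => k _; by rewrite !mxE. Qed.

Section Core.
Variables (n m : nat) (K : 'M[C]_(n,m)).
Local Notation A := (K *m hermt K).

Lemma A_herm : hermt A = A.
Proof. by rewrite hermtM hermtK. Qed.

Lemma quad_ge0 (v : 'rV_n) : 0 <= (v *m A *m hermt v) 0 0.
Proof.
rewrite mulmxA -(mulmxA (v *m K)) -hermtM.
exact: rv_norm_ge0.
Qed.

Lemma A_normal : A \is normalmx.
Proof. by apply/normalmxP; rewrite -hermt_tr A_herm. Qed.

Local Notation P := (spectralmx A).
Local Notation d := (spectral_diag A).

Lemma invP : invmx P = hermt P.
Proof. by rewrite invmx_unitary ?hermt_tr //; exact: spectral_unitarymx. Qed.

Lemma PPh : P *m hermt P = 1%:M.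
Proof. by rewrite -invP mulmxV // spectral_unit. Qed.

Lemma PhP : hermt P *m P = 1%:M.
Proof. by rewrite -invP mulVmx // spectral_unit. Qed.

Lemma Adec : A = hermt P *m diag_mx d *m P.
Proof. by rewrite -invP; apply/orthomx_spectralP; exact: A_normal. Qed.

Lemma PA : P *m A = diag_mx d *m P.
Proof.
transitivity (P *m (hermt P *m diag_mx d *m P)); first by rewrite -Adec.
by rewrite !mulmxA PPh mul1mx.
Qed.

Lemma d_ge0 k : 0 <= d 0 k.
Proof.
have E : diag_mx d = P *m A *m hermt P by rewrite PA -mulmxA PPh mulmx1.
have -> : d 0 k = (diag_mx d) k k by rewrite mxE eqxx mulr1n.
rewrite E.
have -> : P *m A *m hermt P = (P *m K) *m hermt (P *m K) by rewrite hermtM !mulmxA.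
rewrite entry_herm; exact: rv_norm_ge0.
Qed.

Lemma rowP_neq0 k : row k P != 0.
Proof.
apply/negP=> /eqP H; have := PPh; move/matrixP/(_ k k).
rewrite entry_herm H mul0mx !mxE eqxx /= => /eqP.
by rewrite eq_sym oner_eq0.
Qed.

Lemma d_eig k : eigenvalue A (d 0 k).
Proof.
apply/eigenvalueP; exists (row k P); last exact: rowP_neq0.
by rewrite -row_mul PA mul_diag_mx; apply/rowP => j; rewrite !mxE.
Qed.

Lemma eig_ge0 a : eigenvalue A a -> 0 <= a.
Proof.
move/eigenvalueP=> [v Hv vn0]; have := quad_ge0 v.
by rewrite Hv -scalemxAl mxE (pmulr_lge0 _ (@rv_norm_gt0 _ v vn0)).
Qed.

Lemma Alam lam : A + lam%:M = hermt P *m diag_mx (\row_k (d 0 k + lam)) *m P.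
Proof.
have -> : \row_k (d 0 k + lam) = d + const_mx lam by apply/rowP=> k; rewrite !mxE.
rewrite raddfD /= diag_const_mx mulmxDr mulmxDl -Adec mul_mx_scalar -scalemxAl PhP.
by rewrite scalemx1.
Qed.

Lemma dlam_gt0 lam k : 0 < lam -> 0 < d 0 k + lam.
Proof. by move=> Hl; apply: ltr_wpDl (d_ge0 k) Hl. Qed.

Lemma invAlam lam : 0 < lam ->
  invmx (A + lam%:M) = hermt P *m diag_mx (\row_k (d 0 k + lam)^-1) *m P.
Proof.
move=> Hl; set Q := (X in _ = X).
have HQ : (A + lam%:M) *m Q = 1%:M.
  rewrite Alam /Q !mulmxA -[hermt P *m _ *m P *m hermt P]mulmxA PPh mulmx1.
  rewrite -[hermt P *m _ *m _]mulmxA mulmx_diag.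
  have -> : \row_j ((\row_k (d 0 k + lam)) 0 j * (\row_k (d 0 k + lam)^-1) 0 j)
      = const_mx 1.
    by apply/rowP=> j; rewrite !mxE mulfV // gt_eqF // dlam_gt0.
  by rewrite diag_const_mx mulmx1 PhP.
have Hu : A + lam%:M \in unitmx by case/mulmx1_unit: HQ.
by rewrite -[invmx _]mulmx1 -HQ mulmxA mulVmx // mul1mx.
Qed.

Lemma sqnorm_unit (w : 'cV_n) : sqnorm (hermt P *m w) = sqnorm w.
Proof.
by rewrite !sqnormE hermtM hermtK mulmxA -[hermt w *m P *m _]mulmxA PPh mulmx1.
Qed.

Lemma sqnormP (w : 'cV_n) : sqnorm (P *m w) = sqnorm w.
Proof.
by rewrite !sqnormE hermtM mulmxA -[hermt w *m hermt P *m _]mulmxA PhP mulmx1.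
Qed.

Lemma sqnorm_diag (r : 'rV[C]_n) (y : 'cV_n) :
  sqnorm (diag_mx r *m y) = \sum_k `|r 0 k| ^+ 2 * `|y k 0| ^+ 2.
Proof.
by rewrite /sqnorm; apply: eq_bigr => k _; rewrite mul_diag_mx mxE normrM exprMn.
Qed.

Lemma gE x lam : 0 < lam -> sqnorm (invmx (A + lam%:M) *m x) =
  \sum_k `|(P *m x) k 0| ^+ 2 / (d 0 k + lam) ^+ 2.
Proof.
move=> Hl; rewrite invAlam // -!mulmxA sqnorm_unit sqnorm_diag.
apply: eq_bigr => k _; rewrite mxE normfV ger0_norm ?(ltW (dlam_gt0 lam k Hl)) //.
by rewrite exprVn mulrC.
Qed.

Lemma core x : let g lam := sqnorm (invmx (A + lam%:M) *m x) in
 (forall l1 l2, 0 < l1 -> l1 <= l2 -> g l2 <= g l1) /\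
 (forall lam tau smin, 0 < lam -> 0 < tau -> g lam = tau ->
    is_min_eigenvalue A smin -> lam <= sqrtC (sqnorm x / tau) - smin).
Proof.
move=> g; split.
  move=> l1 l2 H1 H12; have H2 : 0 < l2 by apply: lt_le_trans H12.
  rewrite /g !gE //; apply: ler_sum => k _.
  apply: ler_wpM2l; first exact: exprn_ge0.
  rewrite lef_pV2 ?posrE ?exprn_gt0 ?dlam_gt0 //.
  apply: lerXn2r; rewrite ?nnegrE.
  - exact: ltW (dlam_gt0 _ _ H1).
  - exact: ltW (dlam_gt0 _ _ H2).
  by rewrite lerD2l.
move=> lam tau smin Hl Ht Hg [Hs Hmin].
have s0 := eig_ge0 _ Hs.
have Hpos : 0 < smin + lam by apply: ltr_wpDl s0 Hl.
have Hle : tau <= sqnorm x / (smin + lam) ^+ 2.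
  rewrite -Hg /g gE // -(sqnormP x) /sqnorm mulr_suml; apply: ler_sum => k _.
  apply: ler_wpM2l; first exact: exprn_ge0.
  rewrite lef_pV2 ?posrE ?exprn_gt0 ?dlam_gt0 //.
  apply: lerXn2r; rewrite ?nnegrE.
  - exact: ltW.
  - exact: ltW (dlam_gt0 _ _ Hl).
  by rewrite lerD2r; apply: Hmin; apply: d_eig.
have Hsq : (smin + lam) ^+ 2 <= sqnorm x / tau.
  rewrite ler_pdivlMr // mulrC -ler_pdivlMr //; exact: exprn_gt0.
rewrite lerBrDr addrC -(sqrCK (ltW Hpos)) ler_sqrtC // nnegrE.
  exact: exprn_ge0 (ltW Hpos).
exact: le_trans (exprn_ge0 _ (ltW Hpos)) Hsq.
Qed.

End Core.

Lemma hermt_conjm m n (A : 'M[C]_(m,n)) : hermt (conjm A) = A^T.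
Proof.
by rewrite /hermt /conjm -map_mx_comp map_mx_id // => z; exact: conjCK.
Qed.

Lemma claim_gen L N k (X1 : 'M[C]_L) (Zi Ci : 'M[C]_N) (Ti : 'M[C]_(N, L))
  (M : 'M[C]_(k, L)) :
  X1 = hermt M *m M -> Zi = Ci *m hermt Ci -> lemma2_claim X1 Zi Ci Ti.
Proof.
move=> HX HZ; rewrite /lemma2_claim.
set x3 := vec _.
have HA : kron X1 Zi^T = tensmx (hermt M) (conjm Ci) *m hermt (tensmx (hermt M) (conjm Ci)).
  rewrite hermt_tens hermtK hermt_conjm tensmx_mul /kron HX HZ trmx_mul.
  by rewrite /hermt trmxK.
rewrite HA.
have [H1 H2] := core _ _ (tensmx (hermt M) (conjm Ci)) x3.
by split; [move=> l1 l2 *; rewrite !sqnorm_tr; exact: H1 | move=> lam tau smin ? ? Hg; apply: H2 => //; rewrite -sqnorm_tr].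
Qed.

End H.

Theorem lemma2 (C : numClosedFieldType) (N1 N2 LS : nat)
  (Ct1 : 'M[C]_N1) (Ct2 : 'M[C]_N2) (Zt1 : 'M[C]_N1) (Zt2 : 'M[C]_N2)
  (Kq : 'M[C]_LS) (S : 'M[C]_(N1 + N2, LS)) :
  herm_posdef Zt1 -> Zt1 = Ct1 *m hermt Ct1 ->
  herm_posdef Zt2 -> Zt2 = Ct2 *m hermt Ct2 ->
  herm_posdef Kq ->
  let Ct : 'M[C]_(N1 + N2) := block_mx Ct1 0 0 Ct2 in
  let TR1 : 'M[C]_(N1 + N2, LS) :=
    hermt Ct *m conjm S *m invmx (S^T *m Ct *m hermt Ct *m conjm S + Kq) in
  let TR11 : 'M[C]_(N1, LS) := usubmx TR1 in
  let TR12 : 'M[C]_(N2, LS) := dsubmx TR1 in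
  let Xs1 : 'M[C]_LS := hermt TR1 *m hermt Ct *m Ct *m TR1 in
  lemma2_claim Xs1 Zt1 Ct1 TR11 /\ lemma2_claim Xs1 Zt2 Ct2 TR12.
Proof.
move=> _ HZ1 _ HZ2 _ Ct TR1 TR11 TR12 Xs1.
have HX : Xs1 = hermt (Ct *m TR1) *m (Ct *m TR1) by rewrite /Xs1 hermtM !mulmxA.
by split; apply: claim_gen HX _.
Qed.
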